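(* Let $G$ be a graph with an edge coloring $c$, and let $\mathcal{L}$ be the set of connected representing graphs of $(G,c)$. If $$\mathcal{C}_0=\bigcap_{L\in\mathcal{L}}\{c(e): e\in T(L)\}$$ is nonempty, then $(G,c)$ is a good edge coloring, witnessed by a connected representing graph $L^\ast$ and a set of cut edges $X\subseteq T(L^\ast)$ with $\mathcal{C}_0\subseteq c(X)$; that is, $X$ is nonempty, and every edge of $G$ joining two different components of $L^\ast - X$ has a color in $c(X)$.
   Context: A representing graph of a graph $G$ with edge coloring $c$ is a spanning subgraph of $G$ obtained by taking exactly one edge of each color used by $c$. For a set of edges $E$, $c(E)$ denotes the set of colors of edges in $E$. For a graph $L$, $T(L)$ denotes its set of cut edges (bridges). The pair $(G,c)$ is a good edge coloring if there is a connected representing graph $L$ of $G$ and a nonempty set of cut edges $X\subseteq T(L)$ such that each edge of $G$ between different components of $L-X$ is colored by a color in $c(X)$. *)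

(* Defs.v *)
(* An edge colouring is a function from vertex
   pairs to a finite colour type K (only its values on edges matter). *)
From mathcomp Require Import all_boot.
Set Implicit Arguments. Unset Strict Implicit. Unset Printing Implicit Defensive.

Section Defs.
Variables (V K : finType).

Definition simple_edges (EG : {set {set V}}) : Prop :=
  forall e, e \in EG -> #|e| = 2.

Definition adj (F : {set {set V}}) : rel V := fun x y => [set x; y] \in F.

Definition sconnected (F : {set {set V}}) : Prop :=
  forall x y : V, connect (adj F) x y.

Definition components (F : {set {set V}}) : {set {set V}} :=
  [set [set y | connect (adj F) x y] | x : V].

Definition ncomp (F : {set {set V}}) : nat := #|components F|.

Definition cut_edges (F : {set {set V}}) : {set {set V}} :=
  [set e in F | ncomp F < ncomp (F :\ e)].

Definition colors (c : {set V} -> K) (E : {set {set V}}) : {set K} := c @: E.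

Definition representing (EG : {set {set V}}) (c : {set V} -> K)
    (F : {set {set V}}) : Prop :=
  F \subset EG /\
  forall k, k \in colors c EG -> #|[set e in F | c e == k]| = 1.

Definition conn_representing EG c F : Prop :=
  representing EG c F /\ sconnected F.

Definition crossing_colored (EG : {set {set V}}) (c : {set V} -> K)
    (F X : {set {set V}}) : Prop :=
  forall x y : V, [set x; y] \in EG ->
    ~~ connect (adj (F :\: X)) x y -> c [set x; y] \in colors c X.

Definition good_coloring (EG : {set {set V}}) (c : {set V} -> K) : Prop :=
  exists F X, conn_representing EG c F /\ X != set0 /\
    X \subset cut_edges F /\ crossing_colored EG c F X.

Definition in_C0 (EG : {set {set V}}) (c : {set V} -> K) (k : K) : Prop :=
  forall F, conn_representing EG c F -> k \in colors c (cut_edges F).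

End Defs.

(* Main.v *)
Require Import Defs.
From mathcomp Require Import all_boot zify.
Set Implicit Arguments. Unset Strict Implicit. Unset Printing Implicit Defensive.

Section Graph.
Variable V : finType.
Implicit Types F E : {set {set V}}.

Lemma adj_sym F : symmetric (adj F).
Proof. by move=> x y; rewrite /adj setUC. Qed.

Lemma csym F : connect_sym (adj F).
Proof. exact/sym_connect_sym/adj_sym. Qed.

Lemma connect_mono F F' x y : F \subset F' ->
  connect (adj F) x y -> connect (adj F') x y.
Proof.
move=> sFF'; apply: connect_sub => a b Hab; apply: connect1.
by rewrite /adj (subsetP sFF').
Qed.

Definition Sc F x := [set y | connect (adj F) x y].

Lemma ScE F x y : (Sc F x == Sc F y) = connect (adj F) x y.
Proof.
apply/eqP/idP => [E|cxy].
  have : y \in Sc F y by rewrite inE connect0.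
  by rewrite -E inE.
apply/setP => z; rewrite !inE; apply/idP/idP => H.
  by apply: connect_trans H; rewrite csym.
exact: connect_trans cxy H.
Qed.

Lemma compE F : components F = [set Sc F x | x : V].
Proof. by []. Qed.

Definition hmap F' (C : {set V}) := [set y | [exists x in C, connect (adj F') x y]].

Lemma hmapE F F' x : F \subset F' -> hmap F' (Sc F x) = Sc F' x.
Proof.
move=> sF; apply/setP => y; rewrite !inE; apply/existsP/idP => [[z /andP[]]|H].
  by rewrite inE => /(connect_mono sF) H1 H2; apply: connect_trans H1 H2.
by exists x; rewrite inE connect0.
Qed.

Lemma comp_hmap F F' : F \subset F' ->
  components F' = hmap F' @: components F.
Proof.
move=> sF; rewrite !compE -imset_comp; apply: eq_imset => x /=.
by rewrite hmapE.
Qed.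

Lemma ncomp_mono F F' : F \subset F' -> ncomp F' <= ncomp F.
Proof. by move=> sF; rewrite /ncomp (comp_hmap sF) leq_imset_card. Qed.

Lemma ncomp_conn F : sconnected F -> ncomp F <= 1.
Proof.
move=> cF; apply/card_le1_eqP => A B /imsetP[x _ ->] /imsetP[y _ ->].
apply/eqP; rewrite ScE; exact: cF.
Qed.

Lemma conn_ncomp F : ncomp F <= 1 -> sconnected F.
Proof.
move=> /card_le1_eqP H x y; rewrite -ScE; apply/eqP/H; exact: imset_f.
Qed.

Lemma ncomp_pos F (v : V) : 0 < ncomp F.
Proof. by apply/card_gt0P; exists (Sc F v); exact: imset_f. Qed.

Section Add.
Variables (F : {set {set V}}) (x y : V).
Let F' := [set [set x; y]] :|: F.

Lemma sub_F' : F \subset F'.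
Proof. exact: subsetUr. Qed.

Lemma pair_eq a b : [set a; b] = [set x; y] -> (a == x) || (a == y).
Proof. move=> E; have : a \in [set a; b] by rewrite !inE eqxx. by rewrite E !inE. Qed.

Lemma connect_add a b : connect (adj F') a b ->
  connect (adj F) a b ||
  ((connect (adj F) a x || connect (adj F) a y) &&
   (connect (adj F) b x || connect (adj F) b y)).
Proof.
set p := fun b => connect (adj F) a b ||
  ((connect (adj F) a x || connect (adj F) a y) &&
   (connect (adj F) b x || connect (adj F) b y)).
have cl : closed (adj F') p.
  have key : forall u v, adj F' u v -> p u -> p v.
    move=> u v; rewrite /adj /F' !inE => /orP[/eqP E|uvF].
      have hu := pair_eq E.
      have hv : (v == x) || (v == y) by apply: (@pair_eq v u); rewrite setUC.
      rewrite /p => /orP[auv|/andP[-> _]]; last first.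
        by case/orP: hv => /eqP->; rewrite connect0 ?orbT.
      apply/orP; right; apply/andP; split.
        by case/orP: hu => /eqP<-; rewrite auv ?orbT.
      by case/orP: hv => /eqP->; rewrite connect0 ?orbT.
    have cuv : connect (adj F) u v by apply: connect1.
    have cvu : connect (adj F) v u by rewrite csym.
    rewrite /p => /orP[H|/andP[H1 H2]].
      by rewrite (connect_trans H cuv).
    apply/orP; right; rewrite H1 /=.
    by case/orP: H2 => H2; rewrite (connect_trans cvu H2) ?orbT.
  move=> u v uv; apply/idP/idP; first exact: key.
  by apply: key; rewrite adj_sym.
move=> cab.
have := closed_connect cl cab.
rewrite !unfold_in /p connect0 /= => <-; done.
Qed.

Lemma add_conn : connect (adj F) x y -> ncomp F' = ncomp F.
Proof.
move=> cxy; suff E : forall a, Sc F' a = Sc F a.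
  rewrite /ncomp; suff -> : components F' = components F by [].
  by rewrite !compE; apply/setP => C; apply/imsetP/imsetP;
    case=> a _ ->; exists a; rewrite ?E.
move=> a; apply/setP => z; rewrite !inE; apply/idP/idP; last exact: connect_mono sub_F'.
move/connect_add => /orP[//|/andP[ha hz]].
have hax : connect (adj F) a x.
  by case/orP: ha => // H; apply: connect_trans H _; rewrite csym.
have hxz : connect (adj F) x z.
  case/orP: hz => H; rewrite csym //.
  by apply: connect_trans H _; rewrite csym.
exact: connect_trans hax hxz.
Qed.

Lemma add_disc : ~~ connect (adj F) x y -> ncomp F = (ncomp F').+1.
Proof.
move=> dxy.
have cxy' : connect (adj F') x y.
  by apply: connect1; rewrite /adj /F' !inE eqxx.
have hx : Sc F x \in components F by apply: imset_f.
have hy : Sc F y \in components F by apply: imset_f.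
have nxy : Sc F x != Sc F y by rewrite ScE.
rewrite /ncomp (comp_hmap sub_F').
apply/eqP; rewrite eqn_leq; apply/andP; split.
  set A' := components F :\ Sc F y.
  rewrite (cardsD1 (Sc F y)) hy add1n ltnS.
  have <- : #|hmap F' @: A'| = #|A'|.
    apply/eqP/imset_injP => C1 C2; rewrite !inE.
    move=> /andP[n1 /imsetP[a _ E1]] /andP[n2 /imsetP[b _ E2]]; subst C1 C2.
    rewrite !(hmapE _ sub_F') => /eqP; rewrite ScE => /connect_add.
    case/orP => [cab|/andP[ha hb]]; first by apply/eqP; rewrite ScE.
    move: n1 n2; rewrite !ScE => n1 n2.
    rewrite (negbTE n1) (negbTE n2) !orbF in ha hb.
    by apply/eqP; rewrite ScE; apply: connect_trans ha _; rewrite csym.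
  by apply/subset_leq_card/imsetS/subsetDl.
rewrite ltn_neqAle leq_imset_card andbT; apply/negP => /imset_injP inj.
have := inj _ _ hx hy; rewrite !(hmapE _ sub_F').
have -> : Sc F' x = Sc F' y by apply/eqP; rewrite ScE.
by move=> /(_ erefl) /eqP; rewrite (negbTE nxy).
Qed.

Lemma add_le : ncomp F <= (ncomp F').+1.
Proof.
case: (boolP (connect (adj F) x y)) => H.
  by rewrite add_conn // leqW.
by rewrite (add_disc H).
Qed.
End Add.

Definition pairs (E : {set {set V}}) :=
  forall e, e \in E -> exists x y, e = [set x; y] :> {set V}.

Lemma setD1_notin (T : finType) (A : {set T}) a : a \notin A -> A :\ a = A.
Proof.
move=> na; apply/setP => z; rewrite !inE; case: eqP => // ->.
by rewrite (negbTE na).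
Qed.

Lemma ncomp_del F e : (exists x y, e = [set x; y] :> {set V}) ->
  ncomp (F :\ e) <= (ncomp F).+1.
Proof.
case=> x [y ->]; case: (boolP ([set x; y] \in F)) => H.
  by rewrite -{2}(setD1K H); apply: add_le.
by rewrite setD1_notin // leqW.
Qed.

Lemma ncomp_diff F S : pairs S -> ncomp (F :\: S) <= ncomp F + #|S|.
Proof.
move: {2}#|S| (erefl #|S|) => n; elim: n S => [|n IH] S cS pS.
  by move/eqP: cS; rewrite cards_eq0 => /eqP ->; rewrite setD0 cards0 addn0.
have : 0 < #|S| by rewrite cS.
case/card_gt0P => s sS.
have cS' : #|S :\ s| = n by move: cS; rewrite (cardsD1 s) sS add1n => [[]].
have pS' : pairs (S :\ s) by move=> e; rewrite inE => /andP[_ /pS].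
have -> : F :\: S = (F :\: (S :\ s)) :\ s.
  apply/setP => z; rewrite !inE; case: eqP => [->|] /=; first by rewrite sS.
  by [].
apply: leq_trans (ncomp_del _ (pS _ sS)) _.
have := IH _ cS' pS'; rewrite cS cS'; lia.
Qed.

Lemma sub_ncomp E1 E2 : pairs E2 ->
  ncomp E1 + ncomp E2 <= ncomp (E1 :&: E2) + ncomp (E1 :|: E2).
Proof.
move: {2}#|E2 :\: E1| (erefl #|E2 :\: E1|) => n.
elim: n E2 => [|n IH] E2 cE pE.
  move/eqP: cE; rewrite cards_eq0 setD_eq0 => sub.
  by rewrite (setIidPr sub) (setUidPl sub) addnC.
have : 0 < #|E2 :\: E1| by rewrite cE.
case/card_gt0P => e; rewrite inE => /andP[eE1 eE2].
set E2' := E2 :\ e.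
have pE' : pairs E2' by move=> f; rewrite inE => /andP[_ /pE].
have cE' : #|E2' :\: E1| = n.
  have -> : E2' :\: E1 = (E2 :\: E1) :\ e by apply/setP => z; rewrite !inE andbCA.
  by move: cE; rewrite (cardsD1 e) !inE eE1 eE2 add1n => [[]].
have IH' := IH E2' cE' pE'.
have h1 : E1 :&: E2 = E1 :&: E2'.
  apply/setP => z; rewrite !inE; case: eqP => [->|] //=.
  by rewrite (negbTE eE1).
have h2 : E1 :|: E2 = [set e] :|: (E1 :|: E2').
  apply/setP => z; rewrite !inE; case: eqP => [->|] //=; first by rewrite eE2 orbT.
have h3 : E2 = [set e] :|: E2' by rewrite setD1K.
case: (pE _ eE2) => x [y ex].
rewrite h1 h2 {1}h3 ex.
case: (boolP (connect (adj E2') x y)) => cxy.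
  rewrite !add_conn //; apply: connect_mono cxy; exact: subsetUr.
have := add_disc cxy; have := add_le (E1 :|: E2') x y.
move: IH'; move: (ncomp E1) (ncomp E2') (ncomp (E1 :&: E2')) (ncomp (E1 :|: E2')) (ncomp ([set x; y] |: (E1 :|: E2'))) (ncomp ([set x; y] |: E2')) => ? ? ? ? ? ?; lia.
Qed.

End Graph.
Section Color.
Variables (V K : finType) (c : {set V} -> K).
Implicit Types EG F L E : {set {set V}}.

Definition Hs EG (D : {set K}) := [set e in EG | c e \notin D].

Definition cond EG :=
  [forall D : {set K}, ncomp (Hs EG D) <= #|D :&: colors c EG| + 1].

Lemma simple_pairs EG E : simple_edges EG -> E \subset EG -> pairs E.
Proof.
move=> sEG sE e /(subsetP sE) /sEG /eqP /cards2P [x [y [_ ->]]].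
by exists x, y.
Qed.

Lemma rep_inj EG L : representing EG c L -> {in L &, injective c}.
Proof.
case=> sL H e1 e2 h1 h2 E.
have k1 : c e1 \in colors c EG by apply: imset_f; exact: (subsetP sL).
have /card_le1_eqP := eq_leq (H _ k1).
by move=> /(_ e1 e2); rewrite !inE h1 h2 E eqxx => /(_ isT isT).
Qed.

Lemma rep_has EG L k : representing EG c L -> k \in colors c EG ->
  exists2 e, e \in L & c e = k.
Proof.
case=> sL H kc; have /eqP/cards1P [e He] := H _ kc.
have : e \in [set e in L | c e == k] by rewrite He set11.
by rewrite inE => /andP[eL /eqP ce]; exists e.
Qed.

Lemma T0 EG L D : simple_edges EG -> conn_representing EG c L ->
  ncomp (Hs EG D) <= #|D :&: colors c EG| + 1.
Proof.
move=> sEG [rL cL]; set X := [set e in L | c e \in D].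
have sL : L \subset EG by case: rL.
have h1 : L :\: X \subset Hs EG D.
  apply/subsetP => e; rewrite !inE => /andP[H eL]; rewrite (subsetP sL) //=.
  by move: H; rewrite eL.
apply: leq_trans (ncomp_mono h1) _.
have pX : pairs X.
  by apply: (simple_pairs sEG); apply/subsetP => e; rewrite inE => /andP[/(subsetP sL)].
apply: leq_trans (ncomp_diff L pX) _.
have cX : #|X| <= #|D :&: colors c EG|.
  rewrite -(card_in_imset (f := c)); last first.
    by move=> a b; rewrite !inE => /andP[aL _] /andP[bL _]; apply: (rep_inj rL).
  apply: subset_leq_card; apply/subsetP => k /imsetP[e]; rewrite inE.
  case/andP => eL kD ->; rewrite inE kD; apply: imset_f; exact: (subsetP sL).
have := ncomp_conn cL.
move: cX; move: (ncomp L) #|X| #|D :&: colors c EG| => ? ? ?; lia.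
Qed.
End Color.
Section Rado.
Variables (V K : finType) (c : {set V} -> K).
Implicit Types EG F L E : {set {set V}}.

Lemma rep_sub EG EG' F : EG' \subset EG -> colors c EG' = colors c EG ->
  conn_representing EG' c F -> conn_representing EG c F.
Proof.
move=> sE cE [[sF H] cF]; split=> //; split.
  exact: subset_trans sF sE.
by move=> k; rewrite -cE; apply: H.
Qed.

Lemma colors_D1 EG x y : x \in EG -> y \in EG -> x != y -> c x = c y ->
  colors c (EG :\ x) = colors c EG.
Proof.
move=> xE yE nxy cxy; apply/setP => k; apply/imsetP/imsetP => [[e]|[e eE ->]].
  by rewrite inE => /andP[_ eE] ->; exists e.
case: (eqVneq e x) => [ex|nex].
  by exists y; rewrite ?inE ?yE ?andbT 1?eq_sym // ex.
by exists e => //; rewrite !inE nex.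
Qed.

Lemma notcond EG : ~~ cond c EG ->
  exists D : {set K}, #|D :&: colors c EG| + 1 < ncomp (Hs c EG D).
Proof.
by case/forallPn => D; rewrite -ltnNge => H; exists D.
Qed.

Lemma rado n EG : #|EG| <= n -> simple_edges EG -> cond c EG ->
  exists F, conn_representing EG c F.
Proof.
elim: n EG => [|n IH] EG.
  rewrite leqn0 cards_eq0 => /eqP -> _ cE; exists set0; split.
    by split=> // k; rewrite /colors imset0 inE.
  apply: conn_ncomp; move/forallP: cE => /(_ set0).
  have -> : Hs c set0 set0 = set0 by apply/setP => e; rewrite !inE.
  by rewrite set0I cards0.
move=> cEG sEG cE.
case: (boolP [exists x, exists y,
   [&& x \in EG, y \in EG, x != y & c x == c y]]) => [|nex].
  case/existsP => x /existsP [y /and4P [xE yE nxy /eqP cxy]].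
  have step : forall x y, x \in EG -> y \in EG -> x != y -> c x = c y ->
      cond c (EG :\ x) -> exists F, conn_representing EG c F.
    move=> a b aE bE nab cab cnd.
    have [F HF] : exists F, conn_representing (EG :\ a) c F.
      apply: IH => //.
        by move: cEG; rewrite (cardsD1 a) aE add1n ltnS.
      by move=> e; rewrite inE => /andP[_ /sEG].
    exists F; apply: (rep_sub (EG' := EG :\ a)) HF; first exact: subsetDl.
    exact: colors_D1 aE bE nab cab.
  case: (boolP (cond c (EG :\ x))) => [H|nx]; first exact: (step x y).
  case: (boolP (cond c (EG :\ y))) => [H|ny].
    by apply: (step y x); rewrite // eq_sym.
  exfalso.
  have [D1 H1] := notcond nx; have [D2 H2] := notcond ny.
  rewrite (colors_D1 xE yE nxy cxy) in H1.
  rewrite (colors_D1 yE xE _ (esym cxy)) 1?eq_sym // in H2.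
  set i := c x.
  set col := colors c EG.
  have icol : i \in col by apply: imset_f.
  move/forallP: (cE) => cEf.
  have iD1 : i \notin D1.
    apply/negP => iD; have := cEf D1.
    have -> : Hs c EG D1 = Hs c (EG :\ x) D1.
      apply/setP => e; rewrite !inE; case: eqP => [->|] //=.
      by rewrite iD andbF.
    by rewrite leqNgt H1.
  have iD2 : i \notin D2.
    apply/negP => iD; have := cEf D2.
    have -> : Hs c EG D2 = Hs c (EG :\ y) D2.
      apply/setP => e; rewrite !inE; case: eqP => [->|] //=.
      by rewrite -cxy iD andbF.
    by rewrite leqNgt H2.
  set E1 := Hs c (EG :\ x) D1; set E2 := Hs c (EG :\ y) D2.
  have hU : E1 :|: E2 = Hs c EG (D1 :&: D2).
    apply/setP => e; rewrite !inE.
    case: (eqVneq e x) => [->|ex]; first by rewrite nxy xE -/i (negbTE iD2) (negbTE iD1).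
    case: (eqVneq e y) => [->|ey]; first by rewrite yE -cxy -/i (negbTE iD1).
    by case: (e \in EG); case: (c e \in D1); case: (c e \in D2).
  have hI : Hs c EG (i |: (D1 :|: D2)) \subset E1 :&: E2.
    apply/subsetP => e; rewrite !inE negb_or => /andP[eE /andP[nei]].
    rewrite negb_or => /andP[n1 n2]; rewrite eE n1 n2 !andbT.
    by apply/andP; split; apply/eqP => E; move: nei; rewrite E ?(esym cxy) /i eqxx.
  have pE2 : pairs E2.
    apply: (simple_pairs sEG); apply/subsetP => e; rewrite !inE.
    by case/andP => /andP[_ ->].
  have S := sub_ncomp E1 pE2.
  have B1 := cEf (D1 :&: D2).
  have B2 := cEf (i |: (D1 :|: D2)).
  have M := ncomp_mono hI.
  rewrite hU in S.
  have C1 : #|(i |: (D1 :|: D2)) :&: col| = (#|(D1 :|: D2) :&: col|).+1.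
    have -> : (i |: (D1 :|: D2)) :&: col = i |: ((D1 :|: D2) :&: col).
      by apply/setP => e; rewrite !inE; case: eqP => [->|]; rewrite ?icol.
    by rewrite cardsU1 !inE (negbTE iD1) (negbTE iD2).
  have C2 : #|(D1 :|: D2) :&: col| + #|(D1 :&: D2) :&: col| =
            #|D1 :&: col| + #|D2 :&: col|.
    have e1 : (D1 :&: col) :|: (D2 :&: col) = (D1 :|: D2) :&: col.
      by apply/setP => e; rewrite !inE;
         case: (e \in D1); case: (e \in D2); case: (e \in col).
    have e2 : (D1 :&: col) :&: (D2 :&: col) = (D1 :&: D2) :&: col.
      by apply/setP => e; rewrite !inE;
         case: (e \in D1); case: (e \in D2); case: (e \in col).
    by rewrite -e1 -e2 cardsUI.
  rewrite C1 in B2.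
  move: S B1 B2 M C2 H1 H2.
  move: (ncomp E1) (ncomp E2) (ncomp (E1 :&: E2)) (ncomp (Hs c EG (D1 :&: D2)))
    (ncomp (Hs c EG (i |: (D1 :|: D2)))) #|(D1 :|: D2) :&: col|
    #|(D1 :&: D2) :&: col| #|D1 :&: col| #|D2 :&: col| => *; lia.
exists EG; split; last first.
  apply: conn_ncomp; move/forallP: cE => /(_ set0).
  have -> : Hs c EG set0 = EG by apply/setP => e; rewrite !inE andbT.
  by rewrite set0I cards0.
split=> // k /imsetP [e0 e0E ->]; apply/eqP/cards1P; exists e0.
apply/setP => e; rewrite !inE; apply/andP/eqP => [[eE /eqP ce]|->].
  apply/eqP; apply: contraNT nex => ne; apply/existsP; exists e;
  apply/existsP; exists e0; by rewrite eE e0E ne ce eqxx.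
by rewrite e0E eqxx.
Qed.
End Rado.
Section Main.
Variables (V K : finType) (EG : {set {set V}}) (c : {set V} -> K).
Hypothesis sEG : simple_edges EG.
Variable L0 : {set {set V}}.
Hypothesis L0c : conn_representing EG c L0.
Implicit Types F L E : {set {set V}}.

Let col := colors c EG.

Definition tight (D : {set K}) :=
  (D \subset col) && (#|D| + 1 <= ncomp (Hs c EG D)).

Lemma tight_union D1 D2 : tight D1 -> tight D2 -> tight (D1 :|: D2).
Proof.
move=> /andP[s1 t1] /andP[s2 t2]; apply/andP; split; first by rewrite subUset s1.
have pE2 : pairs (Hs c EG D2).
  by apply: (simple_pairs sEG); apply/subsetP => e; rewrite inE => /andP[].
have S := sub_ncomp (Hs c EG D1) pE2.
have hI : Hs c EG D1 :&: Hs c EG D2 = Hs c EG (D1 :|: D2).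
  by apply/setP => e; rewrite !inE; case: (e \in EG); case: (c e \in D1).
have hU : Hs c EG D1 :|: Hs c EG D2 = Hs c EG (D1 :&: D2).
  by apply/setP => e; rewrite !inE; case: (e \in EG); case: (c e \in D1).
rewrite hI hU in S.
have B := T0 (D1 :&: D2) sEG L0c.
have E : D1 :&: D2 :&: colors c EG = D1 :&: D2.
  by apply/setIidPl; apply: subset_trans (subsetIl _ _) _.
rewrite E in B.
have U := cardsUI D1 D2.
move: S B U t1 t2.
move: (ncomp (Hs c EG D1)) (ncomp (Hs c EG D2)) (ncomp (Hs c EG (D1 :|: D2)))
  (ncomp (Hs c EG (D1 :&: D2))) #|D1| #|D2| #|D1 :|: D2| #|D1 :&: D2| => *; lia.
Qed.

Lemma L0_sub : L0 \subset EG. Proof. by case: L0c => [[]]. Qed.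

Lemma inC0_col k : in_C0 EG c k -> k \in col.
Proof.
move=> H; have := H _ L0c; rewrite /colors => /imsetP [e].
rewrite /cut_edges inE => /andP[eL _] ->.
apply: imset_f; exact: (subsetP L0_sub).
Qed.

Lemma inC0_tight k : in_C0 EG c k -> exists2 D, tight D & k \in D.
Proof.
move=> kC; have kcol := inC0_col kC.
set EGk := [set e in EG | c e != k].
have sk : simple_edges EGk by move=> e; rewrite inE => /andP[/sEG].
have norep : forall F, ~ conn_representing EGk c F.
  move=> F [[sF rF] cF].
  have [e0 e0E ce0] : exists2 e, e \in EG & c e = k.
    by case/imsetP: kcol => e eE ->; exists e.
  have e0F : e0 \notin F.
    by apply/negP => /(subsetP sF); rewrite inE ce0 eqxx andbF.
  set F' := e0 |: F.
  have F'c : conn_representing EG c F'.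
    split; last first.
      by move=> a b; apply: connect_mono (cF a b); apply: subsetUr.
    split.
      apply/subsetP => e; rewrite !inE => /orP[/eqP->//|/(subsetP sF)].
      by rewrite inE => /andP[].
    move=> k' /imsetP [e eE ->].
    case: (eqVneq (c e) k) => [cek|cek].
      apply/eqP/cards1P; exists e0; apply/setP => f; rewrite !inE cek.
      case: (eqVneq f e0) => [->|nf]; first by rewrite ce0 eqxx.
      apply/negP => /andP[fF /eqP cf].
      by have := subsetP sF _ fF; rewrite inE cf eqxx andbF.
    have ek : c e \in colors c EGk by apply: imset_f; rewrite inE eE cek.
    rewrite -(rF _ ek); apply: eq_card => f; rewrite !inE.
    case: (eqVneq f e0) => [->|nf] //=.
    by rewrite (negbTE e0F) ce0 eq_sym (negbTE cek).
  have := kC _ F'c; case/imsetP => e; rewrite inE => /andP[eF' ecut] ek.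
  have ee0 : e = e0.
    move: eF'; rewrite !inE => /orP[/eqP//|eF].
    by have := subsetP sF _ eF; rewrite inE -ek eqxx andbF.
  subst e.
  move: ecut; rewrite /F' setU1K //.
  have /eqP/cards2P [x [y [_ exy]]] := sEG e0E.
  by rewrite exy add_conn ?ltnn //; apply: cF.
have ncond : ~~ cond c EGk.
  apply/negP => cnd; have [F HF] := rado (leqnn _) sk cnd.
  exact: norep HF.
have [D HD] := notcond ncond.
set colk := colors c EGk.
have kk : k \notin colk.
  by apply/imsetP => [[e]]; rewrite inE => /andP[_ ne] ek; move: ne; rewrite -ek eqxx.
exists (k |: (D :&: colk)); last by rewrite !inE eqxx.
apply/andP; split.
  rewrite subUset sub1set kcol /=; apply: subset_trans (subsetIr _ _) _.
  by apply: imsetS; apply/subsetP => e; rewrite inE => /andP[].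
have -> : Hs c EG (k |: (D :&: colk)) = Hs c EGk D.
  apply/setP => e; rewrite !inE.
  case: (eqVneq (c e) k) => [E|nek]; first by rewrite /= andbF.
  case eE: (e \in EG) => //=.
  have : c e \in colk by apply: imset_f; rewrite inE eE nek.
  by move=> ->; rewrite andbT.
rewrite cardsU1 !inE (negbTE kk) andbF /=; move: HD; rewrite -/colk.
by move: #|D :&: colk| (ncomp (Hs c EGk D)) => *; lia.
Qed.

End Main.
Theorem lemma9 (V K : finType) (EG : {set {set V}}) (c : {set V} -> K) :
  simple_edges EG ->
  (exists F, conn_representing EG c F) ->
  (exists k, in_C0 EG c k) ->
  good_coloring EG c /\
  exists F X, [/\ conn_representing EG c F, X != set0,
    X \subset cut_edges F, crossing_colored EG c F X &
    forall k, in_C0 EG c k -> k \in colors c X].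
Proof.
move=> sEG [L0 L0c] [k0 k0C].
have [D0 tD0 k0D0] := inC0_tight sEG L0c k0C.
have [[sL rL] cL] := L0c.
have [v _] : exists v : V, true.
  have := inC0_col L0c k0C; case/imsetP => e /sEG /eqP /cards2P [x _] _.
  by exists x.
set Ds := \bigcup_(D | tight EG c D) D.
have tDs : tight EG c Ds.
  apply: (big_ind (tight EG c)) => //.
    by rewrite /tight sub0set cards0 /= ncomp_pos.
  by move=> A B; exact: (@tight_union V K EG c sEG L0 L0c A B).
have C0Ds : forall k, in_C0 EG c k -> k \in Ds.
  move=> k /(inC0_tight sEG L0c) [D tD kD].
  exact: (subsetP (bigcup_sup D tD)).
case/andP: (tDs) => DsCol tight1.
set X := [set e in L0 | c e \in Ds].
have XcolD : forall k, k \in Ds -> k \in colors c X.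
  move=> k kD; have [e eL ek] := rep_has (conj sL rL) (subsetP DsCol _ kD).
  by rewrite -ek; apply: imset_f; rewrite inE eL ek kD.
have cardX : #|X| <= #|Ds|.
  rewrite -(card_in_imset (f := c)); last first.
    by move=> a b; rewrite !inE => /andP[aL _] /andP[bL _]; apply: (rep_inj (conj sL rL)).
  apply: subset_leq_card; apply/subsetP => k /imsetP[e]; rewrite inE.
  by case/andP => eL kD ->.
have hsub : L0 :\: X \subset Hs c EG Ds.
  apply/subsetP => e; rewrite !inE => /andP[H eL]; rewrite (subsetP sL) //=.
  by move: H; rewrite eL.
have nL := ncomp_conn cL.
have pX : pairs X.
  by apply: (simple_pairs sEG); apply/subsetP => e; rewrite inE => /andP[/(subsetP sL)].
have nLX := ncomp_diff L0 pX.
have mLX := ncomp_mono hsub.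
have main : [/\ conn_representing EG c L0, X != set0,
    X \subset cut_edges L0, crossing_colored EG c L0 X &
    forall k, in_C0 EG c k -> k \in colors c X].
  split=> //.
  - have [e eL ek] := rep_has (conj sL rL) (subsetP DsCol _ (C0Ds _ k0C)).
    by apply/set0Pn; exists e; rewrite inE eL ek C0Ds.
  - apply/subsetP => x xX; have xL : x \in L0 by move: xX; rewrite inE => /andP[].
    rewrite inE xL /=.
    have E : L0 :\: X = (L0 :\ x) :\: (X :\ x).
      apply/setP => z; rewrite !inE; case: eqP => [->|] //=.
      by move: xX; rewrite inE => ->.
    have pX' : pairs (X :\ x) by move=> e; rewrite inE => /andP[_ /pX].
    have N := ncomp_diff (L0 :\ x) pX'.
    rewrite -E in N.
    have cX := cardsD1 x X; rewrite xX in cX.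
    move: N cX nL mLX tight1 cardX.
    move: (ncomp (L0 :\: X)) (ncomp (L0 :\ x)) #|X :\ x| #|X| (ncomp L0)
      (ncomp (Hs c EG Ds)) #|Ds| => *; lia.
  - move=> x y gE ncon; apply: XcolD.
    case: (boolP (c [set x; y] \in Ds)) => // nD; exfalso.
    have hs2 : [set [set x; y]] :|: (L0 :\: X) \subset Hs c EG Ds.
      by rewrite subUset hsub sub1set inE gE nD.
    have M := ncomp_mono hs2.
    have A := add_disc ncon.
    move: M A nLX nL tight1 cardX.
    move: (ncomp ([set [set x; y]] :|: (L0 :\: X))) (ncomp (L0 :\: X))
      (ncomp L0) (ncomp (Hs c EG Ds)) #|Ds| #|X| => *; lia.
  - by move=> k /C0Ds /XcolD.
split; last by exists L0, X.
case: main => H1 H2 H3 H4 _.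
by exists L0, X.
Qed.
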